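(* Let $n\ge 2$, $\gamma<1$ real and $z_1,\dots,z_n\in\mathbb{C}$ not all zero with $\frac{\gamma}{n}\big(\sum_\ell z_\ell\big)^2=\sum_\ell z_\ell^2$; write $z_\ell=\alpha_\ell+i\beta_\ell$ and $\vec\alpha=(\alpha_\ell)$, $\vec\beta=(\beta_\ell)$, $\mathbf 1=(1,\dots,1)\in\mathbb{R}^n$. The following are equivalent: (a) there are $a,b,c\in\mathbb{R}$, not all zero, with $a\vec\alpha+b\vec\beta+c\mathbf 1=0$; (b) there is $\lambda\in\mathbb{C}\setminus\{0\}$ with $\lambda z_\ell=\alpha'_\ell+i\beta$ for all $\ell$, where $\alpha'_\ell\in\mathbb{R}$ and $\beta\in\mathbb{R}$ is independent of $\ell$; (c) $n\sum_\ell|z_\ell|^2+(\gamma-2)\big|\sum_\ell z_\ell\big|^2=0$. Moreover, in case (b) necessarily $\beta\ne0$, $\sum_\ell\alpha'_\ell=0$ and $\gamma=1-\frac{1}{n\beta^2}\sum_\ell\alpha_\ell'^2$. Also, if $\sum_\ell z_\ell\ne0$ there is $\lambda\in\mathbb{C}\setminus\{0\}$ such that $w_\ell=\lambda z_\ell$ satisfy $\sum\operatorname{Re}w_\ell=1$, $\sum\operatorname{Im}w_\ell=0$, $\sum\operatorname{Re}w_\ell\operatorname{Im}w_\ell=0$. *)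

(* Defs.v *)
(* Complex numbers are modelled by an arbitrary
   numClosedFieldType C (e.g. algC); the reals are its real elements
   (x \is Num.real), real/imaginary parts are 'Re / 'Im. *)
From HB Require Import structures.
From mathcomp Require Export all_boot all_order all_algebra.
Set Implicit Arguments. Unset Strict Implicit. Unset Printing Implicit Defensive.

(* Main.v *)
Require Import Defs.
From HB Require Import structures.
From mathcomp Require Import all_boot all_order all_algebra.
From mathcomp Require Import ring.
Import Order.TTheory GRing.Theory Num.Theory.
Local Open Scope ring_scope.
Set Implicit Arguments. Unset Strict Implicit. Unset Printing Implicit Defensive.

Lemma sq_expand (C : numClosedFieldType) (n : nat) (x y : 'I_n -> C) (a b c : C) :
  \sum_l (a * x l + b * y l + c) ^+ 2 =
  a ^+ 2 * \sum_l x l ^+ 2 + b ^+ 2 * \sum_l y l ^+ 2 + 2%:R * a * b * \sum_l (x l * y l)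
  + 2%:R * a * c * \sum_l x l + 2%:R * b * c * \sum_l y l + c ^+ 2 * n%:R.
Proof.
rewrite (eq_bigr (fun l => a ^+ 2 * x l ^+ 2 + b ^+ 2 * y l ^+ 2 + 2%:R * a * b * (x l * y l)
  + 2%:R * a * c * x l + 2%:R * b * c * y l + c ^+ 2)); last by move=> l _; ring.
rewrite !big_split /= -!mulr_sumr sumr_const card_ord mulr_natr.
by rewrite expr2 mulrnAr.
Qed.

Lemma sumsq0 (C : numClosedFieldType) (n : nat) (x : 'I_n -> C) :
  (forall l, x l \is Num.real) -> \sum_l x l ^+ 2 <= 0 -> forall l, x l = 0.
Proof.
move=> xr hle l.
have h0 : \sum_l x l ^+ 2 = 0.
  apply/le_anti; rewrite hle /=; apply: sumr_ge0 => i _.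
  exact: real_exprn_even_ge0.
apply/eqP; rewrite -sqrf_eq0; apply/eqP.
apply: (psumr_eq0P _ h0) => // i _; exact: real_exprn_even_ge0.
Qed.
Lemma hrel_parts (C : numClosedFieldType) (n : nat) (g : C) (gr : g \is Num.real)
  (w : 'I_n -> C) (h : g / n%:R * (\sum_l w l) ^+ 2 = \sum_l w l ^+ 2) :
  g / n%:R * ((\sum_l 'Re (w l)) ^+ 2 - (\sum_l 'Im (w l)) ^+ 2)
     = \sum_l ('Re (w l) ^+ 2 - 'Im (w l) ^+ 2)
  /\ g / n%:R * ((\sum_l 'Re (w l)) * (\sum_l 'Im (w l)))
     = \sum_l ('Re (w l) * 'Im (w l)).
Proof.
have gnr : g / n%:R \is Num.real by rewrite rpredM ?rpredV ?realn.
have hS : 'Re (\sum_l w l) = \sum_l 'Re (w l) by rewrite raddf_sum.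
have hI : 'Im (\sum_l w l) = \sum_l 'Im (w l) by rewrite raddf_sum.
have hS2 : 'Re (\sum_l w l ^+ 2) = \sum_l 'Re (w l ^+ 2) by rewrite raddf_sum.
have hI2 : 'Im (\sum_l w l ^+ 2) = \sum_l 'Im (w l ^+ 2) by rewrite raddf_sum.
split.
- have := congr1 (fun u => 'Re u) h.
  rewrite /= ReMl // expr2 ReM hS hI hS2 => ->.
  by apply: eq_bigr => l _; rewrite [w l ^+ 2]expr2 ReM !expr2.
- have := congr1 (fun u => 'Im u) h.
  rewrite /= ImMl // expr2 ImM hS hI hI2.
  have -> : \sum_l 'Im (w l ^+ 2) = (\sum_l 'Re (w l) * 'Im (w l)) *+ 2.
    rewrite -sumrMnl; apply: eq_bigr => l _; by rewrite expr2 ImM mulr2n.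
  by rewrite -mulr2n !mulrnAr => /eqP; rewrite eqr_pMn2r // => /eqP.
Qed.

Lemma part3 (C : numClosedFieldType) (n : nat) (hn : (0 < n)%N)
  (g : C) (gr : g \is Num.real) (hg1 : g < 1)
  (w : 'I_n -> C) (hw : exists l, w l != 0)
  (h : g / n%:R * (\sum_l w l) ^+ 2 = \sum_l w l ^+ 2)
  (beta : C) (br : beta \is Num.real) (him : forall l, 'Im (w l) = beta) :
  [/\ beta != 0, \sum_l 'Re (w l) = 0 &
      g = 1 - (n%:R * beta ^+ 2)^-1 * \sum_l 'Re (w l) ^+ 2].
Proof.
have N0 : (n%:R : C) != 0 by rewrite pnatr_eq0 -lt0n.
have g1 : 1 - g != 0 by rewrite subr_eq0 eq_sym lt_eqF.
have [h1 h2] := hrel_parts gr h.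
have hQ : \sum_l 'Im (w l) = n%:R * beta.
  by rewrite (eq_bigr (fun _ => beta)) // sumr_const card_ord mulr_natl.
set P := \sum_l 'Re (w l) in h1 h2 *.
set Sxx := \sum_l 'Re (w l) ^+ 2.
have Pr : P \is Num.real by apply: rpred_sum => l _; exact: Creal_Re.
have hPb : P * beta = 0.
  move: h2; rewrite hQ (eq_bigr (fun l => 'Re (w l) * beta)); last first.
    by move=> l _; rewrite him.
  rewrite -mulr_suml -/P => e.
  have e' : g * (P * beta) = P * beta by rewrite -[RHS]e; field.
  have : (1 - g) * (P * beta) = 0 by rewrite mulrBl mul1r e' subrr.
  by move/eqP; rewrite mulf_eq0 (negbTE g1) /= => /eqP.
have h1' : g / n%:R * (P ^+ 2 - (n%:R * beta) ^+ 2) = Sxx - n%:R * beta ^+ 2.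
  rewrite -hQ h1 sumrB; congr (_ - _).
  by rewrite (eq_bigr (fun _ => beta ^+ 2)) ?sumr_const ?card_ord ?mulr_natl // => l _; rewrite him.
have [b0|bn0] := eqVneq beta 0.
  exfalso.
  have hS : g / n%:R * P ^+ 2 = Sxx.
    by move: h1'; rewrite b0 !(mulr0, expr0n, subr0) /=.
  have ex := sq_expand (fun l => 'Re (w l)) (fun l => 'Im (w l)) n%:R 0 (- P).
  rewrite -/P -/Sxx in ex.
  have ex2 : \sum_l (n%:R * 'Re (w l) + 0 * 'Im (w l) + - P) ^+ 2
       = - (n%:R * (1 - g) * P ^+ 2).
    by rewrite ex -hS; field.
  have nn : 0 <= n%:R * (1 - g) * P ^+ 2.
    apply: mulr_ge0; last exact: real_exprn_even_ge0.
    by rewrite mulr_ge0 ?ler0n ?subr_ge0 ?(ltW hg1).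
  have tr : forall l, n%:R * 'Re (w l) + 0 * 'Im (w l) + - P \is Num.real.
    by move=> l; rewrite rpredB ?rpredD ?rpredM ?realn ?Creal_Re ?Creal_Im ?rpred0.
  have z := sumsq0 tr.
  have hsum0 : \sum_l (n%:R * 'Re (w l) + 0 * 'Im (w l) + - P) ^+ 2 = 0.
    by rewrite big1 // => l _; rewrite z ?expr0n // ex2 oppr_le0.
  have P0 : P = 0.
    move: hsum0; rewrite ex2 => /eqP; rewrite oppr_eq0 !mulf_eq0 (negbTE N0) (negbTE g1) /=.
    by rewrite orbb => /eqP.
  case: hw => l; apply/negP; rewrite negbK.
  have zl : n%:R * 'Re (w l) = 0.
    have hle : \sum_l (n%:R * 'Re (w l) + 0 * 'Im (w l) - P) ^+ 2 <= 0 by rewrite ex2 oppr_le0.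
    have := z hle l.
    by rewrite mul0r addr0 P0 subr0.
  move: zl => /eqP; rewrite mulf_eq0 (negbTE N0) /= => /eqP re0.
  by rewrite [w l]Crect re0 him b0 mulr0 addr0.
have P0 : P = 0.
  by move: hPb => /eqP; rewrite mulf_eq0 (negbTE bn0) orbF => /eqP.
split => //.
have hx : Sxx = n%:R * beta ^+ 2 - g * (n%:R * beta ^+ 2).
  have -> : Sxx = g / n%:R * (P ^+ 2 - (n%:R * beta) ^+ 2) + n%:R * beta ^+ 2.
    by rewrite h1' subrK.
  by rewrite P0; field.
rewrite hx; field.
by rewrite bn0 N0.
Qed.

Lemma hrel_scale (C : numClosedFieldType) (n : nat) (g lam : C) (z : 'I_n -> C)
  (h : g / n%:R * (\sum_l z l) ^+ 2 = \sum_l z l ^+ 2) :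
  g / n%:R * (\sum_l lam * z l) ^+ 2 = \sum_l (lam * z l) ^+ 2.
Proof.
rewrite -mulr_sumr [RHS](eq_bigr (fun l => lam ^+ 2 * z l ^+ 2)); last by move=> l _; rewrite exprMn.
by rewrite -mulr_sumr -h; ring.
Qed.

Lemma sumRe (C : numClosedFieldType) (n : nat) (w : 'I_n -> C) :
  'Re (\sum_l w l) = \sum_l 'Re (w l).
Proof. by rewrite raddf_sum. Qed.
Lemma sumIm (C : numClosedFieldType) (n : nat) (w : 'I_n -> C) :
  'Im (\sum_l w l) = \sum_l 'Im (w l).
Proof. by rewrite raddf_sum. Qed.

Unset Implicit Arguments.
Theorem lemma6p3 (C : numClosedFieldType) (n : nat) (hn : (2 <= n)%N)
  (gamma : C) (hgr : gamma \is Num.real) (hg1 : gamma < 1)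
  (z : 'I_n -> C) (hz : exists l, z l != 0)
  (hrel : gamma / n%:R * (\sum_l z l) ^+ 2 = \sum_l z l ^+ 2) :
  let A :=
    exists a b c : C, [/\ a \is Num.real, b \is Num.real, c \is Num.real,
      ~~ [&& a == 0, b == 0 & c == 0] &
      forall l, a * 'Re (z l) + b * 'Im (z l) + c = 0] in
  let B :=
    exists lam : C, lam != 0 /\
      exists beta : C, beta \is Num.real /\
        forall l, 'Im (lam * z l) = beta in
  let Cc :=
    n%:R * (\sum_l `|z l| ^+ 2) + (gamma - 2) * `|\sum_l z l| ^+ 2 = 0 in
  [/\ (A <-> B), (B <-> Cc),
      (forall lam beta : C, lam != 0 -> beta \is Num.real ->
         (forall l, 'Im (lam * z l) = beta) ->
         [/\ beta != 0, \sum_l 'Re (lam * z l) = 0 &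
             gamma = 1 - (n%:R * beta ^+ 2)^-1 * \sum_l 'Re (lam * z l) ^+ 2])
    & (\sum_l z l != 0 ->
        exists lam : C, lam != 0 /\
          [/\ \sum_l 'Re (lam * z l) = 1, \sum_l 'Im (lam * z l) = 0 &
              \sum_l 'Re (lam * z l) * 'Im (lam * z l) = 0])].
Proof.
move=> A B Cc.
have hn0 : (0 < n)%N by apply: leq_trans hn.
have N0 : (n%:R : C) != 0 by rewrite pnatr_eq0 -lt0n.
have P3 : forall lam beta : C, lam != 0 -> beta \is Num.real ->
         (forall l, 'Im (lam * z l) = beta) ->
         [/\ beta != 0, \sum_l 'Re (lam * z l) = 0 &
             gamma = 1 - (n%:R * beta ^+ 2)^-1 * \sum_l 'Re (lam * z l) ^+ 2].
  move=> lam beta lam0 br him.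
  apply: (part3 hn0 hgr hg1 _ (hrel_scale lam hrel) br him).
  by case: hz => l hl; exists l; rewrite mulf_neq0.
have AB : A <-> B.
  split.
  - case=> a [b [c [ar br cr nz heq]]].
    exists (b + 'i * a); split.
      apply/negP => /eqP e; move/negP: nz; apply.
      have a0 : a = 0 by rewrite -(Im_rect br ar) e raddf0.
      have b0 : b = 0 by rewrite -(Re_rect br ar) e raddf0.
      case: hz => l _; have := heq l; rewrite a0 b0 !mul0r !add0r => ->.
      by rewrite !eqxx.
    exists (- c); split; first by rewrite rpredN.
    move=> l; rewrite ImM Re_rect ?Im_rect //.
    apply/eqP; rewrite -subr_eq0 opprK; apply/eqP; rewrite -(heq l); ring.
  - case=> lam [lam0 [beta [br him]]].
    exists ('Im lam), ('Re lam), (- beta); split; rewrite ?rpredN //.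
      apply/negP => /and3P [/eqP a0 /eqP b0 _]; move/negP: lam0; apply.
      by rewrite [lam]Crect a0 b0 mulr0 addr0.
    by move=> l; rewrite -(him l) ImM; ring.
have hnorm : forall w : 'I_n -> C, \sum_l `|w l| ^+ 2
    = \sum_l 'Re (w l) ^+ 2 + \sum_l 'Im (w l) ^+ 2.
  by move=> w; rewrite -big_split; apply: eq_bigr => l _; rewrite normC2_Re_Im.
have hnormS : forall w : 'I_n -> C, `|\sum_l w l| ^+ 2
    = (\sum_l 'Re (w l)) ^+ 2 + (\sum_l 'Im (w l)) ^+ 2.
  by move=> w; rewrite normC2_Re_Im sumRe sumIm.
have BC : B -> Cc.
  case=> lam [lam0 [beta [br him]]].
  have [bn0 hP hg] := P3 lam beta lam0 br him.
  have e1 : \sum_l `|lam * z l| ^+ 2 = `|lam| ^+ 2 * \sum_l `|z l| ^+ 2.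
    by rewrite mulr_sumr; apply: eq_bigr => l _; rewrite normrM exprMn.
  have e2 : `|\sum_l lam * z l| ^+ 2 = `|lam| ^+ 2 * `|\sum_l z l| ^+ 2.
    by rewrite -mulr_sumr normrM exprMn.
  have hQ : \sum_l 'Im (lam * z l) = n%:R * beta.
    by rewrite (eq_bigr (fun _ => beta)) // sumr_const card_ord mulr_natl.
  have hQ2 : \sum_l 'Im (lam * z l) ^+ 2 = n%:R * beta ^+ 2.
    by rewrite (eq_bigr (fun _ => beta ^+ 2)) ?sumr_const ?card_ord ?mulr_natl // => l _; rewrite him.
  have e3 : `|lam| ^+ 2 * (n%:R * (\sum_l `|z l| ^+ 2) + (gamma - 2) * `|\sum_l z l| ^+ 2)
      = n%:R * (\sum_l 'Re (lam * z l) ^+ 2 + \sum_l 'Im (lam * z l) ^+ 2)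
        + (gamma - 2) * ((\sum_l 'Re (lam * z l)) ^+ 2 + (\sum_l 'Im (lam * z l)) ^+ 2).
    by rewrite -hnorm -hnormS e1 e2; ring.
  rewrite hP hQ hQ2 in e3.
  move: e3; rewrite [in X in _ = X]hg.
  have -> : forall X : C, n%:R * (X + n%:R * beta ^+ 2) +
     (1 - (n%:R * beta ^+ 2)^-1 * X - 2) * (0 ^+ 2 + (n%:R * beta) ^+ 2) = 0.
    by move=> X; field; rewrite bn0 N0.
  move/eqP; rewrite mulf_eq0 expf_eq0 /= normr_eq0 (negbTE lam0) /=.
  by move/eqP.
have CA : Cc -> A.
  rewrite /Cc hnorm hnormS => hc.
  have [h1 h2] := hrel_parts hgr hrel.
  set P := \sum_l 'Re (z l) in hc h1 h2.
  set Q := \sum_l 'Im (z l) in hc h1 h2.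
  set Sxx := \sum_l 'Re (z l) ^+ 2 in hc h1 h2.
  set Syy := \sum_l 'Im (z l) ^+ 2 in hc h1 h2.
  set Sxy := \sum_l 'Re (z l) * 'Im (z l) in hc h1 h2.
  rewrite sumrB -/Sxx -/Syy in h1.
  have hyy : Syy = Sxx - gamma / n%:R * (P ^+ 2 - Q ^+ 2) by rewrite h1 opprB addrC subrK.
  rewrite hyy in hc.
  set L := (X in X = 0) in hc.
  have hxx : Sxx = (P ^+ 2 + (1 - gamma) * Q ^+ 2) / n%:R.
    have -> : Sxx = (P ^+ 2 + (1 - gamma) * Q ^+ 2) / n%:R + L / (2%:R * n%:R).
      by rewrite /L; field.
    by rewrite hc mul0r addr0.
  have Pr : P \is Num.real by apply: rpred_sum => l _; exact: Creal_Re.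
  have Qr : Q \is Num.real by apply: rpred_sum => l _; exact: Creal_Im.
  have ex := sq_expand (fun l => 'Re (z l)) (fun l => 'Im (z l)) (n%:R * P) (n%:R * Q)
               (- (P ^+ 2 + Q ^+ 2)).
  rewrite -/P -/Q -/Sxx -/Syy -/Sxy -h2 hyy hxx in ex.
  have ex0 : \sum_l (n%:R * P * 'Re (z l) + n%:R * Q * 'Im (z l) + - (P ^+ 2 + Q ^+ 2)) ^+ 2 = 0.
    by rewrite ex; field.
  have tr : forall l, n%:R * P * 'Re (z l) + n%:R * Q * 'Im (z l) + - (P ^+ 2 + Q ^+ 2) \is Num.real.
    by move=> l; rewrite rpredB ?rpredD ?rpredM ?rpredX ?realn ?Creal_Re ?Creal_Im.
  have zz := sumsq0 tr (eq_ind_r (fun u => u <= 0) (lexx (0:C)) ex0).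
  have [PQ0|PQn0] := boolP ((P == 0) && (Q == 0)).
    exfalso; case/andP: PQ0 => /eqP P0 /eqP Q0.
    have Sxx0 : Sxx <= 0 by rewrite hxx P0 Q0 expr0n /= mulr0 addr0 mul0r.
    have Syy0 : Syy <= 0.
      by rewrite hyy hxx P0 Q0 expr0n /= !(mulr0, addr0, mul0r, subr0).
    have x0 := sumsq0 (fun l => Creal_Re (z l)) Sxx0.
    have y0 := sumsq0 (fun l => Creal_Im (z l)) Syy0.
    case: hz => l; apply/negP; rewrite negbK.
    by rewrite [z l]Crect x0 y0 mulr0 addr0.
  exists (n%:R * P), (n%:R * Q), (- (P ^+ 2 + Q ^+ 2)); split.
  - by rewrite rpredM ?realn.
  - by rewrite rpredM ?realn.
  - by rewrite rpredN rpredD ?rpredX.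
  - apply/negP => /and3P [a0 b0 _]; move/negP: PQn0; apply.
    by move: a0 b0; rewrite !mulf_eq0 (negbTE N0) /= => -> ->.
  - by move=> l; rewrite zz.
split => //.
- by split=> [|c]; [exact: BC | exact: (proj1 AB (CA c))].
- move=> S0; exists (\sum_l z l)^-1; split; first by rewrite invr_eq0.
  have hs : \sum_l (\sum_l z l)^-1 * z l = 1 by rewrite -mulr_sumr mulVf.
  have [_ h2] := hrel_parts hgr (hrel_scale (\sum_l z l)^-1 hrel).
  have hR : \sum_l 'Re ((\sum_l z l)^-1 * z l) = 1.
    by rewrite -sumRe hs; apply/Creal_ReP; rewrite rpred1.
  have hI : \sum_l 'Im ((\sum_l z l)^-1 * z l) = 0.
    by rewrite -sumIm hs; apply/Creal_ImP; rewrite rpred1.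
  by split => //; rewrite -h2 hI mulr0 mulr0.
Qed.
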